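(* Assume $\kappa\ge\|f'\|_{C[-\beta,\beta]}$, $\|\phi^0\|_\infty\le\beta$ and $\tau_1<(\kappa m\Gamma(2-\alpha))^{-1/\alpha}$. Then the $L1$-sESAV scheme is energy-stable for arbitrary time steps $\tau_n$, $n\ge2$: $\mathcal E_h[\phi^n,R^n]\le\mathcal E_h[\phi^0,R^0]$ for all $n\ge1$.
   Context: Setting: $\Omega=(0,L)^2$ with periodic boundary conditions; constants $m>0$, $\varepsilon>0$, $\alpha\in(0,1)$. The nonlinearity $f=-F'$ is one of: (double-well) $F(\phi)=\frac14(1-\phi^2)^2$, $f(\phi)=\phi-\phi^3$, with $\beta=1$; or (Flory–Huggins) $F(\phi)=\frac{\theta}{2}[(1+\phi)\ln(1+\phi)+(1-\phi)\ln(1-\phi)]-\frac{\theta_c}{2}\phi^2$, $f(\phi)=\frac{\theta}{2}\ln\frac{1-\phi}{1+\phi}+\theta_c\phi$ on $(-1,1)$, with $\theta_c>\theta>0$ and $\beta\in(0,1)$ the positive root of $f$. In both cases $f(\pm\beta)=0$. Spatial discretization: $M\in\mathbb N$, $h=L/M$; $\mathbb V_h$ is the space of real grid functions $v=\{v_{ij}\}_{i,j\in\mathbb Z}$ that are $M$-periodic in each index; $\langle v,w\rangle=h^2\sum_{i,j=1}^Mv_{ij}w_{ij}$, $\|v\|=\sqrt{\langle v,v\rangle}$, $\|v\|_\infty=\max_{1\le i,j\le M}|v_{ij}|$, $\mathbb V_\beta=\{v\in\mathbb V_h:\|v\|_\infty\le\beta\}$; $\Delta_hv_{ij}=h^{-2}(v_{i+1,j}+v_{i-1,j}+v_{i,j+1}+v_{i,j-1}-4v_{ij})$;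 $\nabla_hv_{ij}=\big(\frac{v_{i+1,j}-v_{ij}}h,\frac{v_{i,j+1}-v_{ij}}h\big)$ and $\|\nabla_hv\|^2=h^2\sum_{i,j=1}^M|\nabla_hv_{ij}|^2$. Scalar functions act on grid functions pointwise. $E_{1h}[v]=\langle F(v),1\rangle$ and $g_h(v,w)=\exp(w)/\exp(E_{1h}[v])$ for $v\in\mathbb V_h$ (with $\|v\|_\infty<1$ in the Flory–Huggins case) and $w\in\mathbb R$. The discrete modified energy is $\mathcal E_h[\phi,R]=\frac{\varepsilon^2}{2}\|\nabla_h\phi\|^2+R$. Auxiliary functional: $V:\mathbb R\to\mathbb R$ satisfies (A1) $V\in C^1(\mathbb R)\cap W^{2,\infty}(\mathbb R)$, $V(1)=1$, $V'(1)=0$, $|V'|\le K_1$; (A2) $0\le V\le K_2$ for a constant $K_2>0$; (A3) $|z_1-1|\le|z_2-1|$ implies $|V(z_1)-1|\le|V(z_2)-1|$. Time grid: $0=t_0<t_1<\dots<t_N=T$, $\tau_k=t_k-t_{k-1}$, $r_k=\tau_k/\tau_{k-1}$ ($k\ge2$), $\nabla_\tau v^k=v^k-v^{k-1}$, $\mathbb D_\tau v^k=\nabla_\tau v^k/\tau_k$, $\omega_\mu(t)=t^{\mu-1}/\Gamma(\mu)$. Constant $\kappa\ge0$; data $\phi^0\in\mathbb V_h$, $R^0\in\mathbb R$. For $n\ge2$ the predicted solution is $\hat\phi^n=\min\{\max\{(1+r_n)\phi^{n-1}-r_n\phi^{n-2},-\beta\},\beta\}$ (pointwise). $L1$-sESAV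 scheme: $A^{(n)}_{n-k}=\frac1{\tau_k}\int_{t_{k-1}}^{t_k}\omega_{1-\alpha}(t_n-s)\,ds$ and $\mathbb D^\alpha_\tau v^n=\sum_{k=1}^nA^{(n)}_{n-k}\nabla_\tau v^k$. For $n=1$, $\hat\phi^1\in\mathbb V_\beta$ is the solution of the nonlinear first-step equation $A^{(1)}_0(\hat\phi^1-\phi^0)=m(\varepsilon^2\Delta_h\hat\phi^1+f(\hat\phi^1))$. For $n\ge1$, with $V^n:=V(g_h(\hat\phi^n,R^{n-1}))$, $(\phi^n,R^n)$ is defined by $\mathbb D^\alpha_\tau\phi^n=m(\varepsilon^2\Delta_h\phi^n+V^nf(\hat\phi^n)-\kappa V^n(\phi^n-\hat\phi^n))$ and $\mathbb D_\tau R^n=V^n\langle-f(\hat\phi^n)+\kappa(\phi^n-\hat\phi^n),\mathbb D_\tau\phi^n\rangle$. *)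

(* Defs.v *)
From Stdlib Require Import Reals.
From Coquelicot Require Import Coquelicot.
Open Scope R_scope.

Definition F_dw (x : R) : R := / 4 * (1 - x ^ 2) ^ 2.
Definition f_dw (x : R) : R := x - x ^ 3.
Definition F_fh (theta thetac x : R) : R :=
  theta / 2 * ((1 + x) * ln (1 + x) + (1 - x) * ln (1 - x)) - thetac / 2 * x ^ 2.
Definition f_fh (theta thetac x : R) : R :=
  theta / 2 * ln ((1 - x) / (1 + x)) + thetac * x.

Definition Gamma (mu : R) : R :=
  RInt_gen (fun t => Rpower t (mu - 1) * exp (- t)) (at_right 0) (Rbar_locally p_infty).
(* omega_mu(t) = t^(mu-1)/Gamma(mu), used only for t > 0 *)
Definition omega (mu t : R) : R := Rpower t (mu - 1) / Gamma mu.

(* A grid function on the M x M periodic grid is represented by its values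
   v i j for 0 <= i, j < M; indices are taken modulo M (periodic extension). *)
Definition grid := nat -> nat -> R.

Fixpoint sumr (n : nat) (g : nat -> R) : R :=
  match n with O => 0 | S n' => sumr n' g + g n' end.

Definition gsum (M : nat) (g : grid) : R :=
  sumr M (fun i => sumr M (fun j => g i j)).

Definition ip (M : nat) (h : R) (v w : grid) : R :=
  h ^ 2 * gsum M (fun i j => v i j * w i j).

Definition nextI (M i : nat) : nat := Nat.modulo (S i) M.
Definition prevI (M i : nat) : nat := Nat.modulo (i + M - 1) M.

Definition lap_h (M : nat) (h : R) (v : grid) : grid := fun i j =>
  (v (nextI M i) j + v (prevI M i) j + v i (nextI M j) + v i (prevI M j)
   - 4 * v i j) / h ^ 2.

Definition grad_norm2 (M : nat) (h : R) (v : grid) : R :=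
  h ^ 2 * gsum M (fun i j =>
    ((v (nextI M i) j - v i j) / h) ^ 2 + ((v i (nextI M j) - v i j) / h) ^ 2).

Definition in_Vbeta (M : nat) (beta : R) (v : grid) : Prop :=
  forall i j, (i < M)%nat -> (j < M)%nat -> Rabs (v i j) <= beta.

Definition E1h (M : nat) (h : R) (F : R -> R) (v : grid) : R :=
  ip M h (fun i j => F (v i j)) (fun _ _ => 1).

Definition g_h (M : nat) (h : R) (F : R -> R) (v : grid) (w : R) : R :=
  exp w / exp (E1h M h F v).

Definition Eh (M : nat) (h eps : R) (phi : grid) (Rv : R) : R :=
  eps ^ 2 / 2 * grad_norm2 M h phi + Rv.

Definition tau (t : nat -> R) (k : nat) : R := t k - t (k - 1)%nat.
Definition ratio (t : nat -> R) (k : nat) : R := tau t k / tau t (k - 1)%nat.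

(* A^{(n)}_{n-k} = 1/tau_k int_{t_{k-1}}^{t_k} omega_{1-alpha}(t_n - s) ds
   (improper integral, the integrand being singular at s = t_n when k = n) *)
Definition L1coef (alpha : R) (t : nat -> R) (n k : nat) : R :=
  / tau t k * RInt_gen (fun s => omega (1 - alpha) (t n - s))
                       (at_right (t (k - 1)%nat)) (at_left (t k)).

Definition L1 (alpha : R) (t : nat -> R) (v : nat -> grid) (n : nat) : grid :=
  fun i j => sumr n (fun k' =>
    L1coef alpha t n (S k') * (v (S k') i j - v k' i j)).

Definition clip (beta x : R) : R := Rmin (Rmax x (- beta)) beta.

Definition V_assumptions (V : R -> R) (K1 K2 : R) : Prop :=
  (forall x, ex_derive V x) /\ (forall x, continuous (Derive V) x) /\
  (exists Lp, forall x y, Rabs (Derive V x - Derive V y) <= Lp * Rabs (x - y)) /\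
  V 1 = 1 /\ Derive V 1 = 0 /\ (forall x, Rabs (Derive V x) <= K1) /\
  0 < K2 /\ (forall x, 0 <= V x <= K2) /\
  (forall z1 z2, Rabs (z1 - 1) <= Rabs (z2 - 1) -> Rabs (V z1 - 1) <= Rabs (V z2 - 1)).

(* Main.v *)
Require Import Defs.
From Stdlib Require Import Reals Lra Lia Psatz.
From Coquelicot Require Import Coquelicot.
Open Scope R_scope.

Lemma sumr_ext n f g : (forall k, (k < n)%nat -> f k = g k) -> sumr n f = sumr n g.
Proof. induction n; simpl; intros H; auto. rewrite IHn by (intros; apply H; lia). rewrite H by lia; auto. Qed.

Lemma sumr_plus n f g : sumr n (fun k => f k + g k) = sumr n f + sumr n g.
Proof. induction n; simpl; [lra|rewrite IHn; lra]. Qed.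

Lemma sumr_minus n f g : sumr n (fun k => f k - g k) = sumr n f - sumr n g.
Proof. induction n; simpl; [lra|rewrite IHn; lra]. Qed.

Lemma sumr_scal n c f : sumr n (fun k => c * f k) = c * sumr n f.
Proof. induction n; simpl; [lra|rewrite IHn; lra]. Qed.

Lemma sumr_le n f g : (forall k, (k < n)%nat -> f k <= g k) -> sumr n f <= sumr n g.
Proof. induction n; simpl; intros H; [lra|]. assert (f n <= g n) by (apply H; lia).
  assert (sumr n f <= sumr n g) by (apply IHn; intros; apply H; lia). lra. Qed.

Lemma sumr_shift n g : sumr (S n) g = g 0%nat + sumr n (fun i => g (S i)).
Proof. induction n; simpl in *; [lra|]. rewrite IHn. lra. Qed.

Lemma nextI_lt M i : (i < M)%nat -> (S i < M)%nat -> nextI M i = S i.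
Proof. intros; unfold nextI; apply Nat.mod_small; auto. Qed.

Lemma nextI_last M i : (S i = M)%nat -> nextI M i = 0%nat.
Proof. intros; unfold nextI; rewrite H; apply Nat.mod_same; lia. Qed.

Lemma prev_next M i : (i < M)%nat -> prevI M (nextI M i) = i.
Proof. intros H. unfold prevI. destruct (Nat.lt_ge_cases (S i) M).
  - rewrite nextI_lt by auto. replace (S i + M - 1)%nat with (i + 1 * M)%nat by lia.
    rewrite Nat.mod_add by lia. apply Nat.mod_small; auto.
  - rewrite nextI_last by lia. replace (0 + M - 1)%nat with i by lia. apply Nat.mod_small; auto.
Qed.

Lemma sumr_nextI M g : (0 < M)%nat -> sumr M (fun i => g (nextI M i)) = sumr M g.
Proof. intros HM. destruct M as [|M]; [lia|].
  cbn [sumr]. rewrite nextI_last by auto.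
  pose proof (sumr_shift M g) as Hs; cbn [sumr] in Hs.
  rewrite (sumr_ext M (fun i => g (nextI (S M) i)) (fun i => g (S i))).
  - lra.
  - intros k Hk. rewrite nextI_lt by lia. auto.
Qed.

Lemma gsum_ext M f g : (forall i j, (i < M)%nat -> (j < M)%nat -> f i j = g i j) -> gsum M f = gsum M g.
Proof. intros H. unfold gsum. apply sumr_ext; intros i Hi. apply sumr_ext; intros j Hj. auto. Qed.

Lemma gsum_plus M f g : gsum M (fun i j => f i j + g i j) = gsum M f + gsum M g.
Proof. unfold gsum. rewrite <- sumr_plus. apply sumr_ext; intros. apply sumr_plus. Qed.

Lemma gsum_minus M f g : gsum M (fun i j => f i j - g i j) = gsum M f - gsum M g.
Proof. unfold gsum. rewrite <- sumr_minus. apply sumr_ext; intros. apply sumr_minus. Qed.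

Lemma gsum_scal M c f : gsum M (fun i j => c * f i j) = c * gsum M f.
Proof. unfold gsum. rewrite <- sumr_scal. apply sumr_ext; intros. apply sumr_scal. Qed.

Lemma gsum_le M f g : (forall i j, (i < M)%nat -> (j < M)%nat -> f i j <= g i j) -> gsum M f <= gsum M g.
Proof. intros H. unfold gsum. apply sumr_le; intros i Hi. apply sumr_le; intros j Hj. auto. Qed.

Lemma gsum_shift_i M g : (0 < M)%nat -> gsum M (fun i j => g (nextI M i) j) = gsum M g.
Proof. intros HM. unfold gsum. apply (sumr_nextI M (fun i => sumr M (fun j => g i j))); auto. Qed.

Lemma gsum_shift_j M g : (0 < M)%nat -> gsum M (fun i j => g i (nextI M j)) = gsum M g.
Proof. intros HM. unfold gsum. apply sumr_ext; intros i Hi.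
  apply (sumr_nextI M (fun j => g i j)); auto. Qed.

Lemma sumr_gsum N M g : sumr N (fun n => gsum M (g n)) = gsum M (fun i j => sumr N (fun n => g n i j)).
Proof. induction N; simpl.
  - unfold gsum. symmetry. rewrite (sumr_ext M _ (fun _ => 0 * 0)). rewrite sumr_scal; lra.
    intros. rewrite (sumr_ext M _ (fun _ => 0 * 0)). rewrite sumr_scal; lra. intros; lra.
  - rewrite IHN. rewrite <- gsum_plus. auto.
Qed.

Lemma lap_sbp M (u v : grid) : (0 < M)%nat ->
  gsum M (fun i j => (u (nextI M i) j + u (prevI M i) j + u i (nextI M j) + u i (prevI M j) - 4 * u i j) * v i j)
  = - gsum M (fun i j => (u (nextI M i) j - u i j) * (v (nextI M i) j - v i j)
                        + (u i (nextI M j) - u i j) * (v i (nextI M j) - v i j)).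
Proof. intros HM.
  assert (E1 : gsum M (fun i j => u (prevI M i) j * v i j) = gsum M (fun i j => u i j * v (nextI M i) j)).
  { rewrite <- (gsum_shift_i M (fun i j => u (prevI M i) j * v i j)) by auto.
    apply gsum_ext; intros. rewrite prev_next; auto. }
  assert (E2 : gsum M (fun i j => u (nextI M i) j * v (nextI M i) j) = gsum M (fun i j => u i j * v i j)).
  { apply (gsum_shift_i M (fun i j => u i j * v i j)); auto. }
  assert (E3 : gsum M (fun i j => u i (prevI M j) * v i j) = gsum M (fun i j => u i j * v i (nextI M j))).
  { rewrite <- (gsum_shift_j M (fun i j => u i (prevI M j) * v i j)) by auto.
    apply gsum_ext; intros. rewrite prev_next; auto. }
  assert (E4 : gsum M (fun i j => u i (nextI M j) * v i (nextI M j)) = gsum M (fun i j => u i j * v i j)).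
  { apply (gsum_shift_j M (fun i j => u i j * v i j)); auto. }
  apply Rplus_eq_reg_r with (gsum M (fun i j => (u (nextI M i) j - u i j) * (v (nextI M i) j - v i j)
                        + (u i (nextI M j) - u i j) * (v i (nextI M j) - v i j))).
  rewrite <- gsum_plus. rewrite Rplus_opp_l.
  rewrite (gsum_ext M _ (fun i j => ((u (prevI M i) j * v i j - u i j * v (nextI M i) j)
     + (u (nextI M i) j * v (nextI M i) j - u i j * v i j))
     + ((u i (prevI M j) * v i j - u i j * v i (nextI M j))
     + (u i (nextI M j) * v i (nextI M j) - u i j * v i j)))).
  2:{ intros; ring. }
  rewrite !gsum_plus, !gsum_minus. rewrite E1, E2, E3, E4. ring.
Qed.
Lemma grad_eq M h u : h <> 0 -> grad_norm2 M h u =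
  gsum M (fun i j => (u (nextI M i) j - u i j) ^ 2 + (u i (nextI M j) - u i j) ^ 2).
Proof. intros Hh. unfold grad_norm2.
  rewrite (gsum_ext M _ (fun i j => / h ^ 2 * ((u (nextI M i) j - u i j) ^ 2 + (u i (nextI M j) - u i j) ^ 2))).
  - rewrite gsum_scal. field. auto.
  - intros. field. auto.
Qed.

Lemma lap_ip M h u u' : (0 < M)%nat -> h <> 0 ->
  ip M h (lap_h M h u) (fun i j => u i j - u' i j) <= - (grad_norm2 M h u - grad_norm2 M h u') / 2.
Proof. intros HM Hh. unfold ip, lap_h.
  rewrite (gsum_ext M _ (fun i j => / h ^ 2 * ((u (nextI M i) j + u (prevI M i) j + u i (nextI M j) + u i (prevI M j) - 4 * u i j) * (u i j - u' i j)))).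
  2:{ intros. field. auto. }
  rewrite gsum_scal. rewrite lap_sbp by auto.
  rewrite !grad_eq by auto.
  replace (h ^ 2 * (/ h ^ 2 * _)) with (- gsum M (fun i j => (u (nextI M i) j - u i j) *
        ((u (nextI M i) j - u' (nextI M i) j) - (u i j - u' i j)) +
        (u i (nextI M j) - u i j) * ((u i (nextI M j) - u' i (nextI M j)) - (u i j - u' i j))))
    by (field; auto).
  rewrite <- gsum_minus.
  assert (H: gsum M (fun i j => ((u (nextI M i) j - u i j) ^ 2 + (u i (nextI M j) - u i j) ^ 2 -
      ((u' (nextI M i) j - u' i j) ^ 2 + (u' i (nextI M j) - u' i j) ^ 2)) / 2) <=
    gsum M (fun i j => (u (nextI M i) j - u i j) *
        ((u (nextI M i) j - u' (nextI M i) j) - (u i j - u' i j)) +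
        (u i (nextI M j) - u i j) * ((u i (nextI M j) - u' i (nextI M j)) - (u i j - u' i j)))).
  { apply gsum_le. intros i j _ _.
    pose proof (pow2_ge_0 ((u (nextI M i) j - u i j) - (u' (nextI M i) j - u' i j))).
    pose proof (pow2_ge_0 ((u i (nextI M j) - u i j) - (u' i (nextI M j) - u' i j))). nra. }
  rewrite (gsum_ext M (fun i j => ((u (nextI M i) j - u i j) ^ 2 + (u i (nextI M j) - u i j) ^ 2 -
      ((u' (nextI M i) j - u' i j) ^ 2 + (u' i (nextI M j) - u' i j) ^ 2)) / 2)
      (fun i j => /2 * ((u (nextI M i) j - u i j) ^ 2 + (u i (nextI M j) - u i j) ^ 2 -
      ((u' (nextI M i) j - u' i j) ^ 2 + (u' i (nextI M j) - u' i j) ^ 2)))) in H by (intros; field).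
  rewrite gsum_scal in H. lra.
Qed.

Lemma sumr_nonneg n f : (forall k, (k < n)%nat -> 0 <= f k) -> 0 <= sumr n f.
Proof. induction n; simpl; intros H; [lra|]. assert (0 <= f n) by (apply H; lia).
  assert (0 <= sumr n f) by (apply IHn; intros; apply H; lia). lra. Qed.

Lemma sumr_S n f : sumr (S n) f = sumr n f + f n.
Proof. reflexivity. Qed.

Lemma Lmin_aux Q d w :
  (forall k, (k < Q)%nat -> 0 <= d k) -> (forall k, (S k < Q)%nat -> d k <= d (S k)) ->
  forall q, (q <= Q)%nat ->
  let L := sumr q (fun n => w n * sumr (S n) (fun k => d k * w k)) in
  let T := sumr q (fun k => d k * w k ^ 2) in
  let Sq := sumr q (fun k => d k * w k) in
  0 <= 2 * L - T /\ (forall e, ((0 < q)%nat -> d (q - 1)%nat <= e) -> 0 <= e -> e * (2 * L - T) >= Sq ^ 2).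
Proof. intros H0 Hm q. induction q; intros Hq L T Sq.
  - subst L T Sq; simpl. split; [lra|]. intros; nra.
  - destruct IHq as [IH1 IH2]; [lia|].
    subst L T Sq. rewrite !sumr_S.
    set (L0 := sumr q (fun n => w n * sumr (S n) (fun k => d k * w k))) in *.
    set (T0 := sumr q (fun k => d k * w k ^ 2)) in *.
    set (S0 := sumr q (fun k => d k * w k)) in *.
    assert (Hdq : 0 <= d q) by (apply H0; lia).
    assert (A : d q * (2 * L0 - T0) >= S0 ^ 2).
    { apply IH2; auto. intros. replace q with (S (q-1)) at 2 by lia. apply Hm. lia. }
    assert (B : d q * (2 * (L0 + w q * (S0 + d q * w q)) - (T0 + d q * w q ^ 2)) >= (S0 + d q * w q) ^ 2) by nra.
    assert (C : 0 <= 2 * (L0 + w q * (S0 + d q * w q)) - (T0 + d q * w q ^ 2)).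
    { destruct (Rlt_dec 0 (d q)).
      - set (X := 2 * (L0 + w q * (S0 + d q * w q)) - (T0 + d q * w q ^ 2)) in *.
        pose proof (pow2_ge_0 (S0 + d q * w q)).
        destruct (Rle_dec 0 X); auto. exfalso. assert (d q * X < 0).
        { rewrite <- (Rmult_0_r (d q)). apply Rmult_lt_compat_l; lra. } lra.
      - assert (Hz : d q = 0) by lra. rewrite Hz in A. assert (S0 = 0) by nra.
        rewrite Hz, H. nra. }
    split; auto.
    intros e He He0. replace (S q - 1)%nat with q in He by lia.
    specialize (He ltac:(lia)).
    assert (HX: d q * (2 * (L0 + w q * (S0 + d q * w q)) - (T0 + d q * w q ^ 2)) <=
                e * (2 * (L0 + w q * (S0 + d q * w q)) - (T0 + d q * w q ^ 2))) by (apply Rmult_le_compat_r; lra).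
    lra.
Qed.

Lemma Lmin Q d w :
  (forall k, (k < Q)%nat -> 0 <= d k) -> (forall k, (S k < Q)%nat -> d k <= d (S k)) ->
  0 <= sumr Q (fun n => w n * sumr (S n) (fun k => d k * w k)).
Proof. intros H0 Hm. destruct (Lmin_aux Q d w H0 Hm Q (le_n _)) as [A _].
  assert (0 <= sumr Q (fun k => d k * w k ^ 2)).
  { apply sumr_nonneg. intros. specialize (H0 k H). nra. }
  lra.
Qed.

Lemma PD N : forall (s : nat -> nat -> R) (w : nat -> R),
  (forall n k, (k <= n < N)%nat -> 0 <= s n k) ->
  (forall n n' k, (k <= n)%nat -> (n <= n' < N)%nat -> s n' k <= s n k) ->
  (forall n k, (S k <= n < N)%nat -> s n k <= s n (S k)) ->
  (forall n n' k, (S k <= n)%nat -> (n <= n' < N)%nat -> s n' (S k) - s n' k <= s n (S k) - s n k) ->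
  0 <= sumr N (fun n => w n * sumr (S n) (fun k => s n k * w k)).
Proof. induction N; intros s w m0 m1 m2 m3.
  - simpl; lra.
  - set (st := fun n k => s n k - s N k).
    assert (E : sumr (S N) (fun n => w n * sumr (S n) (fun k => s n k * w k)) =
       sumr N (fun n => w n * sumr (S n) (fun k => st n k * w k)) +
       sumr (S N) (fun n => w n * sumr (S n) (fun k => s N k * w k))).
    { rewrite !sumr_S.
      rewrite (sumr_ext N (fun n => w n * sumr (S n) (fun k => s n k * w k))
                 (fun n => w n * sumr (S n) (fun k => st n k * w k) + w n * sumr (S n) (fun k => s N k * w k))).
      - rewrite sumr_plus. ring.
      - intros. rewrite <- Rmult_plus_distr_l. f_equal. rewrite <- sumr_plus. apply sumr_ext.
        intros. unfold st. ring. }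
    rewrite E. apply Rplus_le_le_0_compat.
    + apply IHN; unfold st.
      * intros n k Hk. assert (s N k <= s n k) by (apply m1; lia). lra.
      * intros n n' k Hk Hn. assert (s n' k <= s n k) by (apply m1; lia). lra.
      * intros n k Hk. assert (s N (S k) - s N k <= s n (S k) - s n k) by (apply m3; lia). lra.
      * intros n n' k Hk Hn. assert (s n' (S k) - s n' k <= s n (S k) - s n k) by (apply m3; lia). lra.
    + apply Lmin.
      * intros. apply m0. lia.
      * intros. apply m2. lia.
Qed.
Definition Wp (p x : R) : R := if Rlt_dec 0 x then Rpower x p else 0.
Definition om (p x : R) : R := p * Rpower x (p - 1).

Lemma Wp_pos p x : 0 < x -> Wp p x = Rpower x p.
Proof. intros; unfold Wp; destruct (Rlt_dec 0 x); auto; lra. Qed.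
Lemma Wp_npos p x : x <= 0 -> Wp p x = 0.
Proof. intros; unfold Wp; destruct (Rlt_dec 0 x); auto; lra. Qed.

Lemma Rpower_pos x e : 0 < Rpower x e.
Proof. unfold Rpower; apply exp_pos. Qed.

Lemma loc_pos x : 0 < x -> locally x (fun y => 0 < y).
Proof. intros Hx. exists (mkposreal x Hx). intros y Hy.
  unfold ball in Hy; simpl in Hy; unfold AbsRing_ball, abs, minus, plus, opp in Hy; simpl in Hy.
  apply Rabs_def2 in Hy. lra. Qed.

Lemma dRpower x e : 0 < x -> is_derive (fun y => Rpower y e) x (e * Rpower x (e - 1)).
Proof. intros; apply is_derive_Reals; apply derivable_pt_lim_power; auto. Qed.

Lemma dWp p x : 0 < x -> is_derive (Wp p) x (om p x).
Proof. intros Hx. apply is_derive_ext_loc with (fun y => Rpower y p).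
  - generalize (loc_pos x Hx). apply filter_imp. intros y Hy. rewrite Wp_pos; auto.
  - apply dRpower; auto.
Qed.

Lemma dom p x : 0 < x -> is_derive (om p) x (p * ((p - 1) * Rpower x (p - 1 - 1))).
Proof. intros Hx. unfold om. apply is_derive_scal. apply dRpower; auto. Qed.

Lemma Rpower_decr x y e : e < 0 -> 0 < x -> x <= y -> Rpower y e <= Rpower x e.
Proof. intros He Hx Hxy. destruct (Req_dec x y). subst; lra.
  unfold Rpower. left. apply exp_increasing. assert (ln x < ln y) by (apply ln_increasing; lra). nra. Qed.

Lemma Wp_cont p x : 0 < p -> continuous (Wp p) x.
Proof. intros Hp. destruct (Rlt_dec 0 x) as [Hx|Hx].
  - apply (ex_derive_continuous (K:=R_AbsRing) (V:=R_NormedModule) (Wp p) x). eexists. apply dWp; auto.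
  - destruct (Rlt_dec x 0) as [Hx'|Hx'].
    + apply continuous_ext_loc with (fun _ => 0).
      * exists (mkposreal (-x) ltac:(lra)). intros y Hy.
        unfold ball in Hy; simpl in Hy; unfold AbsRing_ball, abs, minus, plus, opp in Hy; simpl in Hy.
        apply Rabs_def2 in Hy. rewrite Wp_npos; auto; lra.
      * apply continuous_const.
    + assert (x = 0) by lra. subst x. apply filterlim_locally. intros eps.
      assert (Hd : 0 < Rpower eps (/ p)) by apply Rpower_pos.
      exists (mkposreal _ Hd). intros y Hy.
      unfold ball in Hy; simpl in Hy; unfold AbsRing_ball, abs, minus, plus, opp in Hy; simpl in Hy.
      unfold ball; simpl; unfold AbsRing_ball, abs, minus, plus, opp; simpl.
      rewrite (Wp_npos p 0) by lra. rewrite Ropp_0, Rplus_0_r in *.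
      destruct (Rlt_dec 0 y).
      * rewrite Wp_pos; auto. rewrite Rabs_right by (left; apply Rpower_pos).
        rewrite Rabs_right in Hy by lra.
        replace (pos eps) with (Rpower (Rpower eps (/ p)) p).
        -- apply Rlt_Rpower_l; auto.
        -- rewrite Rpower_mult. replace (/ p * p) with 1 by (field; lra). apply Rpower_1. apply cond_pos.
      * rewrite Wp_npos by lra. rewrite Rabs_R0. apply cond_pos.
Qed.

Lemma cont_pt p x : 0 < p -> continuity_pt (Wp p) x.
Proof. intros; apply continuity_pt_filterlim; apply Wp_cont; auto. Qed.

Lemma mono g dg a b : a <= b -> (forall x, a < x < b -> is_derive g x (dg x)) ->
  (forall x, a < x < b -> dg x <= 0) -> (forall x, a <= x <= b -> continuous g x) -> g b <= g a.
Proof. intros Hab Hd Hs Hc. destruct (Req_dec a b). subst; lra.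
  set (df := fun x => if Rlt_dec a x then if Rlt_dec x b then dg x else 0 else 0).
  destruct (MVT_gen g a b df) as [c [Hc1 Hc2]].
  - rewrite Rmin_left, Rmax_right by lra. intros x Hx. unfold df.
    destruct (Rlt_dec a x); [|lra]. destruct (Rlt_dec x b); [|lra]. apply Hd; lra.
  - rewrite Rmin_left, Rmax_right by lra. intros x Hx. apply continuity_pt_filterlim. apply Hc; auto.
  - rewrite Rmin_left, Rmax_right in Hc1 by lra.
    assert (df c <= 0). { unfold df. destruct (Rlt_dec a c); [|lra]. destruct (Rlt_dec c b); [|lra]. apply Hs; lra. }
    assert (df c * (b - a) <= 0). { apply Rmult_le_0_r; lra. } lra.
Qed.

Lemma is_derive_lin F dFx c x : is_derive F x dFx -> is_derive (fun y => F y - c * y) x (dFx - c).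
Proof. intros H. assert (H2 : is_derive (fun y : R => c * y) x c).
  { auto_derive; [auto | ring]. }
  apply (is_derive_minus F (fun y => c * y) x dFx c); auto. Qed.

Lemma cont_lin F c x : continuous F x -> continuous (fun y => F y - c * y) x.
Proof. intros H. apply (continuous_minus F (fun y => c * y)); auto.
  apply (continuous_mult (fun _ => c) (fun y => y)). apply continuous_const. apply continuous_id. Qed.

Lemma chord F dF u v w : u < v < w -> (forall x, u < x < w -> is_derive F x (dF x)) ->
  (forall x, u <= x <= w -> continuous F x) -> (forall x y, u < x -> x <= y -> y < w -> dF y <= dF x) ->
  (F w - F v) / (w - v) <= (F v - F u) / (v - u).
Proof. intros Huvw Hd Hc Hm.
  assert (A : (fun y => F y - dF v * y) w <= (fun y => F y - dF v * y) v).
  { apply (mono (fun y => F y - dF v * y) (fun x => dF x - dF v) v w); try lra.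
    - intros. apply is_derive_lin. apply Hd. lra.
    - intros. assert (dF x <= dF v) by (apply Hm; lra). lra.
    - intros. apply cont_lin. apply Hc; lra. }
  assert (B : (fun y => - (F y - dF v * y)) v <= (fun y => - (F y - dF v * y)) u).
  { apply (mono (fun y => - (F y - dF v * y)) (fun x => - (dF x - dF v)) u v); try lra.
    - intros. apply (is_derive_opp (fun y => F y - dF v * y)). apply is_derive_lin. apply Hd. lra.
    - intros. assert (dF v <= dF x) by (apply Hm; lra). lra.
    - intros. apply (continuous_opp (fun y => F y - dF v * y)). apply cont_lin. apply Hc; lra. }
  simpl in A, B.
  apply Rle_trans with (dF v).
  - apply Rmult_le_reg_r with (w - v); [lra|]. unfold Rdiv. rewrite Rmult_assoc, Rinv_l by lra. lra.
  - apply Rmult_le_reg_r with (v - u); [lra|]. unfold Rdiv. rewrite Rmult_assoc, Rinv_l by lra. lra.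
Qed.

Definition DW (p a b : R) : R := (Wp p b - Wp p a) / (b - a).

Lemma exW p x : 0 < x -> ex_derive (fun y => Wp p y) x.
Proof. intros; eexists; apply dWp; auto. Qed.
Lemma DerW p x : 0 < x -> Derive (fun y => Wp p y) x = om p x.
Proof. intros; apply is_derive_unique; apply dWp; auto. Qed.

Lemma contWs p c x : 0 < p -> continuous (fun y => Wp p (y + c)) x.
Proof. intros Hp. apply (continuous_comp (fun y => y + c) (Wp p)).
  - apply (ex_derive_continuous (K:=R_AbsRing) (V:=R_NormedModule) (fun y => y + c)). auto_derive; auto.
  - apply Wp_cont; auto.
Qed.

Lemma contD p c1 c2 h x : 0 < p -> continuous (fun y => (Wp p (y + c1) - Wp p (y + c2)) / h) x.
Proof. intros Hp.
  apply (continuous_mult (fun y => Wp p (y + c1) - Wp p (y + c2)) (fun _ => / h)).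
  - apply (continuous_minus (fun y => Wp p (y + c1)) (fun y => Wp p (y + c2))); apply contWs; auto.
  - apply continuous_const.
Qed.

Lemma om_decr p x y : 0 < p < 1 -> 0 < x -> x <= y -> om p y <= om p x.
Proof. intros Hp Hx Hxy. unfold om. apply Rmult_le_compat_l; [lra|]. apply Rpower_decr; lra. Qed.

Lemma Wp_incr p a b : 0 < p -> 0 <= a -> a < b -> Wp p a < Wp p b.
Proof. intros Hp Ha Hab. rewrite (Wp_pos p b) by lra. destruct (Req_dec a 0).
  - subst. rewrite Wp_npos by lra. apply Rpower_pos.
  - rewrite Wp_pos by lra. apply Rlt_Rpower_l; lra.
Qed.

Lemma I1 p a b : 0 < p -> 0 <= a -> a < b -> 0 < DW p a b.
Proof. intros. unfold DW. assert (Wp p a < Wp p b) by (apply Wp_incr; auto).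
  apply Rdiv_lt_0_compat; lra. Qed.

Lemma I3 p a b c : 0 < p < 1 -> 0 <= a -> a < b -> b < c -> DW p b c <= DW p a b.
Proof. intros Hp Ha Hab Hbc. unfold DW. apply (chord (Wp p) (om p)).
  - lra.
  - intros; apply dWp; lra.
  - intros; apply Wp_cont; lra.
  - intros; apply om_decr; lra.
Qed.

Lemma I2 p a b d : 0 < p < 1 -> 0 <= a -> a < b -> 0 <= d -> DW p (a + d) (b + d) <= DW p a b.
Proof. intros Hp Ha Hab Hd. unfold DW.
  replace (b + d - (a + d)) with (b - a) by ring.
  pose (g := fun y => (Wp p (y + (b - a)) - Wp p (y + 0)) / (b - a)).
  assert (g (a + d) <= g a).
  { apply (mono g (fun x => (om p (x + (b - a)) - om p (x + 0)) / (b - a))); try lra.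
    - intros x Hx. unfold g. auto_derive.
      + repeat split; apply exW; lra.
      + rewrite !DerW by lra. field. lra.
    - intros x Hx. apply Rmult_le_0_r; [|left; apply Rinv_0_lt_compat; lra].
      assert (om p (x + (b - a)) <= om p (x + 0)) by (apply om_decr; lra). lra.
    - intros. apply contD; lra. }
  unfold g in H. rewrite !Rplus_0_r in H. replace (a + d + (b - a)) with (b + d) in H by ring.
  replace (a + (b - a)) with b in H by ring. auto.
Qed.

Lemma om_convex p u v w : 0 < p < 1 -> 0 < u -> u < v -> v < w ->
  (om p v - om p u) / (v - u) <= (om p w - om p v) / (w - v).
Proof. intros Hp Hu Huv Hvw.
  assert (H := chord (fun x => - om p x) (fun x => - (p * ((p - 1) * Rpower x (p - 1 - 1)))) u v w).
  assert (((- om p w) - (- om p v)) / (w - v) <= ((- om p v) - (- om p u)) / (v - u)).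
  { apply H.
    - lra.
    - intros. apply (is_derive_opp (om p)). apply dom. lra.
    - intros. apply (continuous_opp (om p)).
      apply (ex_derive_continuous (K:=R_AbsRing) (V:=R_NormedModule) (om p)). eexists; apply dom; lra.
    - intros x y Hx Hxy Hy. assert (Rpower y (p - 1 - 1) <= Rpower x (p - 1 - 1)) by (apply Rpower_decr; lra).
      assert (0 < p * (1 - p)) by nra. nra. }
  unfold Rdiv in *. lra.
Qed.

Lemma I4 p a b c d : 0 < p < 1 -> 0 <= a -> a < b -> b < c -> 0 <= d ->
  DW p (a + d) (b + d) - DW p (b + d) (c + d) <= DW p a b - DW p b c.
Proof. intros Hp Ha Hab Hbc Hd. unfold DW.
  replace (b + d - (a + d)) with (b - a) by ring. replace (c + d - (b + d)) with (c - b) by ring.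
  pose (g := fun y => (Wp p (y + (b - a)) - Wp p (y + 0)) / (b - a) - (Wp p (y + (c - a)) - Wp p (y + (b - a))) / (c - b)).
  assert (g (a + d) <= g a).
  { apply (mono g (fun x => (om p (x + (b - a)) - om p (x + 0)) / (b - a) - (om p (x + (c - a)) - om p (x + (b - a))) / (c - b))); try lra.
    - intros x Hx. unfold g. auto_derive.
      + repeat split; apply exW; lra.
      + rewrite !DerW by lra. field. lra.
    - intros x Hx. assert (Hc := om_convex p (x + 0) (x + (b - a)) (x + (c - a)) Hp ltac:(lra) ltac:(lra) ltac:(lra)).
      replace (x + (b - a) - (x + 0)) with (b - a) in Hc by ring.
      replace (x + (c - a) - (x + (b - a))) with (c - b) in Hc by ring. lra.
    - intros. unfold g. apply (continuous_minus (fun y => (Wp p (y + (b - a)) - Wp p (y + 0)) / (b - a))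
        (fun y => (Wp p (y + (c - a)) - Wp p (y + (b - a))) / (c - b))); apply contD; lra. }
  unfold g in H. rewrite !Rplus_0_r in H.
  replace (a + d + (b - a)) with (b + d) in H by ring. replace (a + d + (c - a)) with (c + d) in H by ring.
  replace (a + (b - a)) with b in H by ring. replace (a + (c - a)) with c in H by ring. auto.
Qed.

Lemma ballR x e y : ball x e y <-> Rabs (y - x) < e.
Proof. unfold ball; simpl; unfold AbsRing_ball, abs, minus, plus, opp; simpl. tauto. Qed.

Lemma locR x (P : R -> Prop) (e : R) : 0 < e -> (forall y, Rabs (y - x) < e -> P y) -> locally x P.
Proof. intros He H. exists (mkposreal e He). intros y Hy. apply H. apply ballR in Hy. auto. Qed.

Lemma cont_delta (F : R -> R) x e : continuous F x -> 0 < e -> locally x (fun y => Rabs (F y - F x) < e).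
Proof. intros Hc He. apply filterlim_locally with (eps := mkposreal e He) in Hc.
  revert Hc. apply filter_imp. intros y Hy. apply ballR in Hy. auto. Qed.

Lemma L1int p G T a b : 0 < p < 1 -> 0 < G -> a < b -> b <= T ->
  is_RInt_gen (fun s => Rpower (T - s) (p - 1) / G) (at_right a) (at_left b)
    ((Wp p (T - a) - Wp p (T - b)) / (p * G)).
Proof. intros Hp HG Hab HbT.
  set (F := fun s => - Wp p (T - s) / (p * G)).
  assert (HFc : forall x, continuous F x).
  { intros x. unfold F. apply (continuous_mult (fun s => - Wp p (T - s)) (fun _ => / (p * G))).
    - apply (continuous_opp (fun s => Wp p (T - s))).
      apply (continuous_comp (fun s => T - s) (Wp p)).
      + apply (ex_derive_continuous (K:=R_AbsRing) (V:=R_NormedModule) (fun s => T - s)). auto_derive; auto.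
      + apply Wp_cont; lra.
    - apply continuous_const. }
  unfold is_RInt_gen, filterlimi, filter_le, filtermapi. intros P [eps Heps].
  apply (Filter_prod _ _ _ (fun x => (a < x < (a + b) / 2) /\ Rabs (F x - F a) < eps / 2)
                       (fun y => ((a + b) / 2 < y < b) /\ Rabs (F y - F b) < eps / 2)).
  - unfold at_right, within.
    assert (H1 := cont_delta F a (eps / 2) (HFc a) ltac:(destruct eps; simpl; lra)).
    assert (H2 : locally a (fun x => x < (a + b) / 2)).
    { apply locR with ((b - a) / 2). lra. intros y Hy. apply Rabs_def2 in Hy. lra. }
    generalize (filter_and _ _ H1 H2). apply filter_imp. intros x [Hx1 Hx2] Hx3. repeat split; lra.
  - unfold at_left, within.
    assert (H1 := cont_delta F b (eps / 2) (HFc b) ltac:(destruct eps; simpl; lra)).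
    assert (H2 : locally b (fun x => (a + b) / 2 < x)).
    { apply locR with ((b - a) / 2). lra. intros y Hy. apply Rabs_def2 in Hy. lra. }
    generalize (filter_and _ _ H1 H2). apply filter_imp. intros x [Hx1 Hx2] Hx3. repeat split; lra.
  - intros x y [Hx Fx] [Hy Fy]. simpl. exists (F y - F x). split.
    + replace (F y - F x) with (minus (F y) (F x)) by reflexivity.
      apply (is_RInt_derive (V:=R_CompleteNormedModule) F (fun s => Rpower (T - s) (p - 1) / G)).
      * rewrite Rmin_left, Rmax_right by lra. intros z Hz. unfold F.
        auto_derive.
        -- apply exW. lra.
        -- rewrite DerW by lra. unfold om. replace (T + - z) with (T - z) by ring.
           field. split; lra.
      * rewrite Rmin_left, Rmax_right by lra. intros z Hz.
        apply (continuous_mult (fun s => Rpower (T - s) (p - 1)) (fun _ => / G)); [|apply continuous_const].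
        apply (ex_derive_continuous (K:=R_AbsRing) (V:=R_NormedModule) (fun s => Rpower (T - s) (p - 1))).
        eexists. apply (is_derive_comp (fun u => Rpower u (p - 1)) (fun s => T - s)).
        -- apply dRpower. lra.
        -- auto_derive; auto.
    + apply Heps. apply ballR.
      replace ((Wp p (T - a) - Wp p (T - b)) / (p * G)) with (F b - F a) by (unfold F; field; lra).
      apply Rabs_def2 in Fx. apply Rabs_def2 in Fy. apply Rabs_def1; destruct eps; simpl in *; lra.
Qed.

Lemma Rpower1b e : Rpower 1 e = 1.
Proof. unfold Rpower; rewrite ln_1, Rmult_0_r, exp_0; auto. Qed.

Section GammaPos.
Variable p : R.
Hypothesis Hp : 0 < p < 1.
Let g := fun t => Rpower t (p - 1) * exp (- t).

Lemma g_cont x : 0 < x -> continuous g x.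
Proof. intros Hx. apply (ex_derive_continuous (K:=R_AbsRing) (V:=R_NormedModule) g).
  unfold g. eexists. apply (is_derive_mult (fun t => Rpower t (p - 1)) (fun t => exp (- t))).
  - apply dRpower; auto.
  - auto_derive; auto.
  - intros; apply Rmult_comm.
Qed.

Lemma g_ex x y : 0 < x -> x <= y -> ex_RInt g x y.
Proof. intros. apply (ex_RInt_continuous (V:=R_CompleteNormedModule)). rewrite Rmin_left, Rmax_right by lra. intros; apply g_cont; lra. Qed.

Lemma g_pos x : 0 < x -> 0 < g x.
Proof. intros; unfold g. apply Rmult_lt_0_compat; [apply Rpower_pos|apply exp_pos]. Qed.

Lemma g_bound a b : 0 < a < 1 -> 1 < b -> RInt g a b <= / p + 1.
Proof. intros Ha Hb.
  rewrite <- (RInt_Chasles g a 1 b) by (apply g_ex; lra).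
  assert (H1 : RInt g a 1 <= / p).
  { assert (Hi : is_RInt (fun t => Rpower t (p - 1)) a 1 (minus (Rpower 1 p / p) (Rpower a p / p))).
    { apply (is_RInt_derive (V:=R_CompleteNormedModule) (fun t => Rpower t p / p)).
      - rewrite Rmin_left, Rmax_right by lra. intros x Hx.
        apply (is_derive_ext (fun t => / p * Rpower t p)); [intros t; change (/ p * Rpower t p = Rpower t p / p); unfold Rdiv; ring|].
        replace (Rpower x (p - 1)) with (/ p * (p * Rpower x (p - 1))) by (field; lra).
        apply is_derive_scal. apply dRpower; lra.
      - rewrite Rmin_left, Rmax_right by lra. intros x Hx.
        apply (ex_derive_continuous (K:=R_AbsRing) (V:=R_NormedModule) (fun t => Rpower t (p - 1))).
        eexists; apply dRpower; lra. }
    apply Rle_trans with (RInt (fun t => Rpower t (p - 1)) a 1).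
    - apply RInt_le; try lra. apply g_ex; lra. eexists; eauto.
      intros x Hx. unfold g. rewrite <- (Rmult_1_r (Rpower x (p - 1))) at 2.
      apply Rmult_le_compat_l. left; apply Rpower_pos.
      rewrite <- exp_0. left; apply exp_increasing; lra.
    - rewrite (is_RInt_unique _ _ _ _ Hi). unfold minus, plus, opp; simpl.
      rewrite Rpower1b. assert (0 < Rpower a p / p) by (apply Rdiv_lt_0_compat; [apply Rpower_pos|lra]).
      unfold Rdiv in *. lra. }
  assert (H2 : RInt g 1 b <= 1).
  { assert (Hi : is_RInt (fun t => exp (- t)) 1 b (minus (- exp (- b)) (- exp (- 1)))).
    { apply (is_RInt_derive (V:=R_CompleteNormedModule) (fun t => - exp (- t))).
      - intros x Hx. auto_derive; auto. ring.
      - intros x Hx. apply (ex_derive_continuous (K:=R_AbsRing) (V:=R_NormedModule) (fun t => exp (- t))).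
        auto_derive; auto. }
    apply Rle_trans with (RInt (fun t => exp (- t)) 1 b).
    - apply RInt_le; try lra. apply g_ex; lra. eexists; eauto.
      intros x Hx. unfold g. rewrite <- (Rmult_1_l (exp (- x))) at 2.
      apply Rmult_le_compat_r. left; apply exp_pos.
      replace 1 with (Rpower 1 (p - 1)) at 2 by (unfold Rpower; rewrite ln_1, Rmult_0_r, exp_0; auto).
      apply Rpower_decr; lra.
    - rewrite (is_RInt_unique _ _ _ _ Hi). unfold minus, plus, opp; simpl.
      assert (exp (- 1) <= 1). { rewrite <- exp_0. left; apply exp_increasing; lra. }
      assert (0 < exp (- b)) by apply exp_pos. lra. }
  change (RInt g a 1 + RInt g 1 b <= / p + 1). lra.
Qed.
End GammaPos.

Lemma Gamma_pos p : 0 < p < 1 -> 0 < Gamma p.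
Proof. intros Hp.
  set (g := fun t => Rpower t (p - 1) * exp (- t)).
  set (E := fun y => exists a b, 0 < a < 1 /\ 1 < b /\ y = RInt g a b).
  assert (Hb : bound E).
  { exists (/ p + 1). intros y [a [b [Ha [Hb' ->]]]]. apply (g_bound p Hp); auto. }
  assert (He : exists y, E y). { exists (RInt g (/2) 2). exists (/2), 2. repeat split; lra. }
  destruct (completeness E Hb He) as [l [Hl1 Hl2]].
  assert (Hg : is_RInt_gen g (at_right 0) (Rbar_locally p_infty) l).
  { unfold is_RInt_gen, filterlimi, filter_le, filtermapi. intros P [eps Heps].
    assert (Hex : exists y, E y /\ l - eps < y).
    { destruct (Classical_Prop.classic (exists y, E y /\ l - eps < y)) as [H|H]; auto.
      exfalso. assert (l <= l - eps).
      { apply Hl2. intros y Hy. destruct (Rle_dec y (l - eps)); auto. exfalso; apply H. exists y; split; auto; lra. }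
      destruct eps; simpl in *; lra. }
    destruct Hex as [y [[a0 [b0 [Ha0 [Hb0 ->]]]] Hy]].
    apply (Filter_prod _ _ _ (fun x => 0 < x < a0) (fun y => b0 < y)).
    - unfold at_right, within. apply locR with a0. lra. intros z Hz Hz0. apply Rabs_def2 in Hz. lra.
    - simpl. exists b0. auto.
    - intros x y Hx Hy'. simpl. exists (RInt g x y). split.
      + apply (RInt_correct (V:=R_CompleteNormedModule)). apply (g_ex p); lra.
      + apply Heps. apply ballR.
        assert (Hup : RInt g x y <= l). { apply Hl1. exists x, y. repeat split; lra. }
        assert (Hsplit : RInt g x y = RInt g x a0 + RInt g a0 b0 + RInt g b0 y).
        { rewrite <- (RInt_Chasles g x a0 y) by (apply (g_ex p); lra).
          rewrite <- (RInt_Chasles g a0 b0 y) by (apply (g_ex p); lra).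
          change (RInt g x a0 + (RInt g a0 b0 + RInt g b0 y) = RInt g x a0 + RInt g a0 b0 + RInt g b0 y). ring. }
        assert (0 <= RInt g x a0).
        { apply RInt_ge_0; try lra. apply (g_ex p); lra. intros; left; apply (g_pos p); lra. }
        assert (0 <= RInt g b0 y).
        { apply RInt_ge_0; try lra. apply (g_ex p); lra. intros; left; apply (g_pos p); lra. }
        apply Rabs_def1; lra. }
  unfold Gamma. fold g. rewrite (is_RInt_gen_unique g l Hg).
  apply Rlt_le_trans with (RInt g (/2) 2).
  - apply RInt_gt_0; try lra.
    + intros; apply (g_pos p); lra.
    + intros; apply (g_cont p); lra.
  - apply Hl1. exists (/2), 2. repeat split; lra.
Qed.

Lemma gsum_nonneg M f : (forall i j, (i < M)%nat -> (j < M)%nat -> 0 <= f i j) -> 0 <= gsum M f.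
Proof. intros H. unfold gsum. apply sumr_nonneg; intros. apply sumr_nonneg; intros. auto. Qed.

Lemma step M h eps m kappa (L1g : grid) (u u' fh hh : grid) Vn R1 R0 tu :
  (0 < M)%nat -> h <> 0 -> 0 < m -> tu <> 0 ->
  (forall i j, (i < M)%nat -> (j < M)%nat ->
     L1g i j = m * (eps ^ 2 * lap_h M h u i j + Vn * fh i j - kappa * Vn * (u i j - hh i j))) ->
  (R1 - R0) / tu = Vn * ip M h (fun i j => - fh i j + kappa * (u i j - hh i j))
                              (fun i j => (u i j - u' i j) / tu) ->
  Eh M h eps u R1 - Eh M h eps u' R0 <= - ip M h L1g (fun i j => u i j - u' i j) / m.
Proof. intros HM Hh Hm Ht HL HR.
  set (P := gsum M (fun i j => (fh i j - kappa * (u i j - hh i j)) * (u i j - u' i j))).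
  assert (E1 : ip M h L1g (fun i j => u i j - u' i j) =
     m * eps ^ 2 * ip M h (lap_h M h u) (fun i j => u i j - u' i j) + m * Vn * (h ^ 2 * P)).
  { unfold ip. rewrite (gsum_ext M _ (fun i j => (m * eps ^ 2) * (lap_h M h u i j * (u i j - u' i j))
        + (m * Vn) * ((fh i j - kappa * (u i j - hh i j)) * (u i j - u' i j)))).
    - rewrite gsum_plus, !gsum_scal. unfold P. ring.
    - intros. rewrite HL by auto. ring. }
  assert (E2 : ip M h (fun i j => - fh i j + kappa * (u i j - hh i j)) (fun i j => (u i j - u' i j) / tu)
               = - (h ^ 2 * P) / tu).
  { unfold ip. rewrite (gsum_ext M _ (fun i j => (- / tu) * ((fh i j - kappa * (u i j - hh i j)) * (u i j - u' i j)))).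
    - rewrite gsum_scal. unfold P. field. auto.
    - intros. field. auto. }
  rewrite E2 in HR.
  assert (E3 : R1 - R0 = - Vn * (h ^ 2 * P)).
  { apply Rmult_eq_reg_r with (/ tu). 2:{ apply Rinv_neq_0_compat; auto. }
    replace ((R1 - R0) * / tu) with ((R1 - R0) / tu) by reflexivity. rewrite HR. field. auto. }
  assert (E4 := lap_ip M h u u' HM Hh).
  unfold Eh. rewrite E1.
  replace (- (m * eps ^ 2 * ip M h (lap_h M h u) (fun i j => u i j - u' i j) + m * Vn * (h ^ 2 * P)) / m)
    with (- eps ^ 2 * ip M h (lap_h M h u) (fun i j => u i j - u' i j) - Vn * (h ^ 2 * P)) by (field; lra).
  assert (0 <= eps ^ 2) by (apply pow2_ge_0).
  assert (eps ^ 2 * ip M h (lap_h M h u) (fun i j => u i j - u' i j) <=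
          eps ^ 2 * (- (grad_norm2 M h u - grad_norm2 M h u') / 2)) by (apply Rmult_le_compat_l; auto).
  lra.
Qed.

Lemma tmono (t : nat -> R) N : (forall k, (k < N)%nat -> t k < t (S k)) ->
  forall i j, (i <= j <= N)%nat -> t i <= t j.
Proof. intros Ht i j Hij. induction j.
  - replace i with 0%nat by lia. lra.
  - destruct (Nat.eq_dec i (S j)). subst; lra.
    assert (t i <= t j) by (apply IHj; lia). assert (t j < t (S j)) by (apply Ht; lia). lra.
Qed.

Lemma L1coef_eq alpha (t : nat -> R) n k : 0 < alpha < 1 -> (1 <= k <= n)%nat ->
  t (k - 1)%nat < t k -> t k <= t n ->
  L1coef alpha t n k = DW (1 - alpha) (t n - t k) (t n - t (k - 1)%nat) * / ((1 - alpha) * Gamma (1 - alpha)).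
Proof. intros Ha Hk Ht1 Ht2.
  assert (HG := Gamma_pos (1 - alpha) ltac:(lra)).
  assert (H := L1int (1 - alpha) (Gamma (1 - alpha)) (t n) (t (k - 1)%nat) (t k) ltac:(lra) HG Ht1 Ht2).
  change (is_RInt_gen (fun s => omega (1 - alpha) (t n - s)) (at_right (t (k - 1)%nat)) (at_left (t k))
    ((Wp (1 - alpha) (t n - t (k - 1)%nat) - Wp (1 - alpha) (t n - t k)) / ((1 - alpha) * Gamma (1 - alpha)))) in H.
  apply (is_RInt_gen_unique (V:=R_CompleteNormedModule)) in H.
  unfold L1coef. rewrite H.
  unfold DW, tau. field. split; [lra|]. split; lra.
Qed.

Theorem mainTheorem6
  (L m eps alpha kappa : R) (M N : nat)
  (F f : R -> R) (beta : R)
  (V : R -> R) (K1 K2 : R)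
  (t : nat -> R) (phi hphi : nat -> grid) (Rs : nat -> R) :
  0 < L -> (0 < M)%nat -> 0 < m -> 0 < eps -> 0 < alpha < 1 -> 0 <= kappa ->
  (* nonlinearity: double-well or Flory-Huggins *)
  ((F = F_dw /\ f = f_dw /\ beta = 1) \/
   (exists theta thetac, 0 < theta < thetac /\
      F = F_fh theta thetac /\ f = f_fh theta thetac /\
      0 < beta < 1 /\ f beta = 0)) ->
  V_assumptions V K1 K2 ->
  (* time grid *)
  t 0%nat = 0 -> (forall k, (k < N)%nat -> t k < t (S k)) ->
  (* hypotheses of the theorem *)
  (forall x, - beta <= x <= beta -> Rabs (Derive f x) <= kappa) ->
  in_Vbeta M beta (phi 0%nat) ->
  (1 <= N)%nat ->
  tau t 1 < Rpower (kappa * m * Gamma (2 - alpha)) (- / alpha) ->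
  (* the L1-sESAV scheme, with h = L / M *)
  let h := L / INR M in
  (* first step predictor *)
  in_Vbeta M beta (hphi 1%nat) ->
  (forall i j, (i < M)%nat -> (j < M)%nat ->
     L1coef alpha t 1 1 * (hphi 1%nat i j - phi 0%nat i j)
     = m * (eps ^ 2 * lap_h M h (hphi 1%nat) i j + f (hphi 1%nat i j))) ->
  (* predictor for n >= 2 *)
  (forall n i j, (2 <= n <= N)%nat -> (i < M)%nat -> (j < M)%nat ->
     hphi n i j = clip beta ((1 + ratio t n) * phi (n - 1)%nat i j
                             - ratio t n * phi (n - 2)%nat i j)) ->
  (* main step *)
  (forall n i j, (1 <= n <= N)%nat -> (i < M)%nat -> (j < M)%nat ->
     let Vn := V (g_h M h F (hphi n) (Rs (n - 1)%nat)) in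
     L1 alpha t phi n i j
     = m * (eps ^ 2 * lap_h M h (phi n) i j + Vn * f (hphi n i j)
            - kappa * Vn * (phi n i j - hphi n i j))) ->
  (forall n, (1 <= n <= N)%nat ->
     let Vn := V (g_h M h F (hphi n) (Rs (n - 1)%nat)) in
     (Rs n - Rs (n - 1)%nat) / tau t n
     = Vn * ip M h (fun i j => - f (hphi n i j) + kappa * (phi n i j - hphi n i j))
                   (fun i j => (phi n i j - phi (n - 1)%nat i j) / tau t n)) ->
  forall n, (1 <= n <= N)%nat ->
    Eh M h eps (phi n) (Rs n) <= Eh M h eps (phi 0%nat) (Rs 0%nat).
Proof.
  intros HL HM Hm Heps Ha Hk Hnl HV Ht0 Ht Hf Hphi0 HN Htau h Hh1 Hfirst Hpred Hmain HR n Hn.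
  assert (Hh : h <> 0).
  { unfold h. assert (0 < INR M) by (apply lt_0_INR; lia). apply Rgt_not_eq. apply Rdiv_lt_0_compat; lra. }
  assert (Tm := tmono t N Ht).
  set (E := fun n => Eh M h eps (phi n) (Rs n)).
  set (X := fun r => ip M h (L1 alpha t phi (S r)) (fun i j => phi (S r) i j - phi r i j)).
  assert (Hstep : forall r, (r < N)%nat -> E (S r) - E r <= - X r / m).
  { intros r Hr. unfold E, X.
    assert (Htu : tau t (S r) <> 0). { unfold tau. replace (S r - 1)%nat with r by lia.
      assert (t r < t (S r)) by (apply Ht; lia). lra. }
    pose proof (Hmain (S r)) as Hm1. pose proof (HR (S r) ltac:(lia)) as HR1.
    replace (S r - 1)%nat with r in Hm1, HR1 by lia.
    apply (step M h eps m kappa (L1 alpha t phi (S r)) (phi (S r)) (phi r)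
             (fun i j => f (hphi (S r) i j)) (hphi (S r))
             (V (g_h M h F (hphi (S r)) (Rs r))) (Rs (S r)) (Rs r) (tau t (S r))); auto.
    intros i j Hi Hj. apply (Hm1 i j ltac:(lia) Hi Hj). }
  assert (Htel : forall n0, (n0 <= N)%nat -> E n0 <= E 0%nat - sumr n0 X / m).
  { induction n0; intros Hn0.
    - simpl. unfold Rdiv. lra.
    - assert (E n0 <= E 0%nat - sumr n0 X / m) by (apply IHn0; lia).
      assert (E (S n0) - E n0 <= - X n0 / m) by (apply Hstep; lia).
      rewrite sumr_S. unfold Rdiv in *. rewrite Rmult_plus_distr_r. lra. }
  set (p := 1 - alpha).
  assert (Hp : 0 < p < 1) by (unfold p; lra).
  set (C := / ((1 - alpha) * Gamma (1 - alpha))).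
  assert (HC : 0 < C).
  { unfold C. apply Rinv_0_lt_compat. apply Rmult_lt_0_compat. lra. apply Gamma_pos. lra. }
  assert (Hs : forall r k, (k <= r < N)%nat ->
            L1coef alpha t (S r) (S k) = DW p (t (S r) - t (S k)) (t (S r) - t k) * C).
  { intros r k Hrk. rewrite L1coef_eq; auto; try lia.
    - replace (S k - 1)%nat with k by lia. reflexivity.
    - replace (S k - 1)%nat with k by lia. apply Ht; lia.
    - apply Tm; lia. }
  assert (HPD : forall n0, (n0 <= N)%nat -> forall w : nat -> R,
     0 <= sumr n0 (fun r => w r * sumr (S r) (fun k => L1coef alpha t (S r) (S k) * w k))).
  { intros n0 Hn0 w. apply PD.
    - intros r k Hrk. rewrite Hs by lia. apply Rmult_le_pos; [|lra].
      left. apply I1; try lra.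
      + assert (t (S k) <= t (S r)) by (apply Tm; lia). lra.
      + assert (t k < t (S k)) by (apply Ht; lia). lra.
    - intros r r' k Hk1 Hr. rewrite !Hs by lia. apply Rmult_le_compat_r; [lra|].
      assert (H1 := I2 p (t (S r) - t (S k)) (t (S r) - t k) (t (S r') - t (S r)) Hp).
      replace (t (S r) - t (S k) + (t (S r') - t (S r))) with (t (S r') - t (S k)) in H1 by ring.
      replace (t (S r) - t k + (t (S r') - t (S r))) with (t (S r') - t k) in H1 by ring.
      apply H1.
      + assert (t (S k) <= t (S r)) by (apply Tm; lia). lra.
      + assert (t k < t (S k)) by (apply Ht; lia). lra.
      + assert (t (S r) <= t (S r')) by (apply Tm; lia). lra.
    - intros r k Hrk. rewrite !Hs by lia. apply Rmult_le_compat_r; [lra|].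
      apply I3; auto.
      + assert (t (S (S k)) <= t (S r)) by (apply Tm; lia). lra.
      + assert (t (S k) < t (S (S k))) by (apply Ht; lia). lra.
      + assert (t k < t (S k)) by (apply Ht; lia). lra.
    - intros r r' k Hk1 Hr. rewrite !Hs by lia.
      rewrite <- !Rmult_minus_distr_r. apply Rmult_le_compat_r; [lra|].
      assert (H1 := I4 p (t (S r) - t (S (S k))) (t (S r) - t (S k)) (t (S r) - t k) (t (S r') - t (S r)) Hp).
      replace (t (S r) - t (S (S k)) + (t (S r') - t (S r))) with (t (S r') - t (S (S k))) in H1 by ring.
      replace (t (S r) - t (S k) + (t (S r') - t (S r))) with (t (S r') - t (S k)) in H1 by ring.
      replace (t (S r) - t k + (t (S r') - t (S r))) with (t (S r') - t k) in H1 by ring.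
      apply H1.
      + assert (t (S (S k)) <= t (S r)) by (apply Tm; lia). lra.
      + assert (t (S k) < t (S (S k))) by (apply Ht; lia). lra.
      + assert (t k < t (S k)) by (apply Ht; lia). lra.
      + assert (t (S r) <= t (S r')) by (apply Tm; lia). lra. }
  assert (HX : forall n0, (n0 <= N)%nat -> 0 <= sumr n0 X).
  { intros n0 Hn0. unfold X, ip. rewrite sumr_scal. apply Rmult_le_pos; [apply pow2_ge_0|].
    rewrite sumr_gsum. apply gsum_nonneg. intros i j Hi Hj.
    rewrite (sumr_ext n0 _ (fun r => (phi (S r) i j - phi r i j) *
         sumr (S r) (fun k => L1coef alpha t (S r) (S k) * (phi (S k) i j - phi k i j)))).
    - apply (HPD n0 Hn0 (fun r => phi (S r) i j - phi r i j)).
    - intros. unfold L1. apply Rmult_comm. }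
  specialize (Htel n ltac:(lia)). specialize (HX n ltac:(lia)).
  unfold E in Htel. assert (0 <= sumr n X / m) by (apply Rdiv_le_0_compat; lra). lra.
Qed.
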